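(* Let $f$ be a $(b,1)$-coloring of the Hamming graph $H(n,q)$. Then $b$ is divisible by $q-1$. Moreover, if $q=p^s$ for a prime $p$ and $s\ge1$, then $b+1=q^r$ for some positive integer $r$.
   Context: The Hamming graph $H(n,q)$ has vertex set $\mathbb{Z}_q^n$, two vertices adjacent iff they differ in exactly one coordinate. A perfect $2$-coloring is a surjective map $f$ from the vertices onto $\{1,2\}$ such that each vertex of color $i$ has exactly $s_{i,j}$ neighbours of color $j$ (constants depending only on $i,j$). A $(b,c)$-coloring of $H(n,q)$ is a perfect $2$-coloring with quotient matrix $\begin{pmatrix} n(q-1)-b & b\\ c & n(q-1)-c\end{pmatrix}$, i.e. every vertex of color 1 has exactly $b$ neighbours of color 2 and every vertex of color 2 has exactly $c$ neighbours of color 1. *)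

(* Defs.v *)
From mathcomp Require Import all_boot.
Set Implicit Arguments. Unset Strict Implicit. Unset Printing Implicit Defensive.

(* Vertices of the Hamming graph H(n,q): words of length n over an alphabet
   of size q (we use 'I_q as Z_q; only equality of symbols matters). *)
Definition hvert (n q : nat) : finType := {ffun 'I_n -> 'I_q}.

Definition hadj (n q : nat) (x y : hvert n q) : bool :=
  #|[set i : 'I_n | x i != y i]| == 1.

(* A (b,c)-coloring: a surjective 2-coloring (color 1 = true, color 2 = false)
   such that every vertex of color 1 has exactly b neighbours of color 2 and
   every vertex of color 2 has exactly c neighbours of color 1.  (The diagonal
   entries n(q-1)-b, n(q-1)-c of the quotient matrix then hold automatically,
   since H(n,q) is n(q-1)-regular.) *)
Definition bc_coloring (n q : nat) (f : hvert n q -> bool) (b c : nat) : Prop :=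
  [/\ (exists x, f x), (exists x, ~~ f x),
      (forall x, f x -> #|[set y | hadj x y & ~~ f y]| = b) &
      (forall x, ~~ f x -> #|[set y | hadj x y & f y]| = c)].

(* Main.v *)
Require Import Defs.
From mathcomp Require Import all_boot.
From mathcomp Require Import zify.
Set Implicit Arguments. Unset Strict Implicit. Unset Printing Implicit Defensive.

Section S.
Variables (n q : nat).
Implicit Types (x y : hvert n q).

Definition upd x (i : 'I_n) (a : 'I_q) : hvert n q :=
  [ffun j => if j == i then a else x j].

Lemma upd_self x i : upd x i (x i) = x.
Proof. by apply/ffunP => j; rewrite ffunE; case: eqP => // ->. Qed.

Lemma hadj_upd x i a a' : a != a' -> hadj (upd x i a) (upd x i a').
Proof.
move=> ne; rewrite /hadj.
have -> : [set j | upd x i a j != upd x i a' j] = [set i].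
  apply/setP => j; rewrite !inE !ffunE; by case: (j == i); rewrite ?ne ?eqxx.
by rewrite cards1.
Qed.

Lemma hadj_sym x y : hadj x y = hadj y x.
Proof.
rewrite /hadj.
suff -> : [set j | x j != y j] = [set j | y j != x j] by [].
by apply/setP => j; rewrite !inE eq_sym.
Qed.

Lemma hadjP x y : hadj x y -> exists i, y = upd x i (y i) /\ y i != x i.
Proof.
move=> /cards1P [i Hi]; exists i; split.
  apply/ffunP => j; rewrite ffunE; case: eqP => [-> //|/eqP nji].
  apply/eqP; rewrite eq_sym; apply/negPn; apply/negP => H.
  have : j \in [set i] by rewrite -Hi inE.
  by rewrite inE (negbTE nji).
have : i \in [set j | x j != y j] by rewrite Hi set11.
by rewrite inE eq_sym.
Qed.

Lemma upd_inj x i j a a' : a != x i -> a' != x j -> upd x i a = upd x j a' -> i = j /\ a = a'.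
Proof.
move=> ha ha' /ffunP /(_ i); rewrite !ffunE eqxx.
case: (i =P j) => [-> //|_ E]; by rewrite E eqxx in ha.
Qed.


Variable f : hvert n q -> bool.
Hypothesis H1 : forall z, ~~ f z -> #|[set y | hadj z y & f y]| = 1.

Lemma key x i a a' : f x -> f (upd x i a) -> a != x i -> a' != x i -> f (upd x i a').
Proof.
move=> fx fa ha ha'.
apply/negPn/negP => nf.
have := H1 nf.
have h1 : hadj (upd x i a') (upd x i (x i)) by apply: hadj_upd.
rewrite upd_self in h1.
case: (a' =P a) => [E|/eqP ne]; first by rewrite E fa in nf.
have h2 : hadj (upd x i a') (upd x i a) by apply: hadj_upd.
have sub : [set x; upd x i a] \subset [set y | hadj (upd x i a') y & f y].
  by apply/subsetP => y; rewrite !inE => /orP [] /eqP ->; rewrite ?h1 ?h2 ?fx ?fa.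
have := subset_leq_card sub; rewrite cards2.
have -> : x != upd x i a.
  apply/eqP => /ffunP /(_ i); rewrite ffunE eqxx => E.
  by rewrite E eqxx in ha.
by move=> le E; rewrite E in le.
Qed.

Lemma card_N2 x : #|[set y | hadj x y & ~~ f y]| =
  \sum_i #|[set a | (a != x i) && ~~ f (upd x i a)]|.
Proof.
have -> : [set y | hadj x y & ~~ f y] = [set upd x p.1 p.2 | p in
   [set p : 'I_n * 'I_q | (p.2 != x p.1) && ~~ f (upd x p.1 p.2)]].
  apply/setP => y; rewrite inE; apply/andP/imsetP.
    case=> /hadjP [i [Ey Hi]] nf; exists (i, y i); rewrite ?inE /= -?Ey ?Hi //.
  case=> [[i a]]; rewrite inE /= => /andP [ha nf] ->; split => //.
  have := @hadj_upd x i (x i) a; rewrite upd_self; apply; by rewrite eq_sym.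
rewrite card_in_imset; last first.
  move=> [i a] [j a'] /=; rewrite !inE /= => /andP[h1 _] /andP[h2 _] /(upd_inj h1 h2).
  by case=> -> ->.
rewrite -sum1_card.
under [RHS]eq_bigr => i _ do rewrite -sum1_card.
rewrite pair_big_dep /=.
by apply: eq_bigl => p; rewrite !inE.
Qed.

Lemma dvd_N2 x : f x -> q.-1 %| #|[set y | hadj x y & ~~ f y]|.
Proof.
move=> fx; rewrite card_N2; apply: dvdn_sum => i _.
case: (boolP [exists a, (a != x i) && f (upd x i a)]).
  case/existsP => a /andP [ha fa].
  suff -> : [set a | (a != x i) && ~~ f (upd x i a)] = set0 by rewrite cards0.
  apply/setP => a'; rewrite !inE; apply/negP => /andP [ha' nf].
  by rewrite (key fx fa ha ha') in nf.
rewrite negb_exists => /forallP H.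
suff -> : #|[set a | (a != x i) && ~~ f (upd x i a)]| = q.-1 by [].
have -> : q.-1 = #|predC1 (x i)| by rewrite cardC1 card_ord.
apply: eq_card => a; rewrite !inE.
have := H a; rewrite negb_and negbK.
by case: (a == x i) => //= ->.
Qed.

Lemma dcount : \sum_(x | f x) #|[set y | hadj x y & ~~ f y]| =
  \sum_(y | ~~ f y) #|[set x | hadj y x & f x]|.
Proof.
transitivity (\sum_x \sum_y (f x && hadj x y && ~~ f y : nat)).
  rewrite [LHS]big_mkcond /=; apply: eq_bigr => x _.
  case: (f x) => /=; last by rewrite big1.
  rewrite -sum1_card big_mkcond /=; apply: eq_bigr => y _; rewrite inE.
  by case: (_ && _).
rewrite exchange_big /= [RHS]big_mkcond /=; apply: (@eq_bigr _ _ _ (hvert n q)) => y _.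
case: (boolP (f y)) => fy /=; first by rewrite big1 // => x _; rewrite andbF.
rewrite -sum1_card [RHS]big_mkcond /=; apply: eq_bigr => x _; rewrite inE hadj_sym andbT.
by rewrite andbC; case: (_ && _).
Qed.

End S.
Lemma nt p s m k : prime p -> 0 < s -> p^m = k*(p^s - 1) + 1 -> s %| m.
Proof.
move=> pp s0 E.
have p2 : 1 < p by apply prime_gt1.
have h2s : 2^s <= p^s by rewrite leq_exp2r.
have h21 : 2^1 <= 2^s by rewrite leq_exp2l.
case: (leqP (p^s) 2) => hq.
  have : 2^s <= 2^1 by lia.
  rewrite leq_exp2l // => s1.
  have -> : s = 1 by lia.
  exact: dvd1n.
set q := p^s in E hq.
set v := m %% s; set u := m %/ s.
have Em : p^m = q^u * p^v.
  by rewrite {1}(divn_eq m s) expnD -/u -/v [u * s]mulnC expnM.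
have hmod1 : p^m %% (q-1) = 1.
  by rewrite E modnMDl modn_small //; lia.
have hq1 : q %% (q-1) = 1.
  have E1 : q = (q - 1) + 1 by lia.
  by rewrite {1}E1 modnDl modn_small //; lia.
have hqu : q^u %% (q-1) = 1.
  by rewrite -modnXm hq1 exp1n modn_small //; lia.
have hv : p^v %% (q-1) = 1.
  by rewrite -[RHS]hmod1 Em -modnMml hqu mul1n.
have vs : v < s by rewrite ltn_pmod.
have pvS : p^v.+1 <= q by rewrite leq_exp2l.
have pv1 : 1 <= p^v by rewrite expn_gt0; lia.
have pvlt : p^v < q - 1.
  rewrite expnS in pvS.
  have : 2 * p^v <= p * p^v by rewrite leq_mul2r p2 orbT.
  move: pvS pv1 hq; clear; set x := p^v; lia.
rewrite modn_small // in hv.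
have v0 : v = 0.
  by apply/eqP; rewrite -(eqn_exp2l _ _ p2) expn0 hv.
by rewrite /dvdn -/v v0.
Qed.

Theorem proposition4 (n q : nat) (f : hvert n q -> bool) (b : nat) :
  bc_coloring f b 1 ->
  (q - 1 %| b) /\
  (forall p s : nat, prime p -> 0 < s -> q = p ^ s ->
     exists r : nat, 0 < r /\ b + 1 = q ^ r).
Proof.
move=> [[x0 fx0] [y0 fy0] Hb H1].
have dvdb : q.-1 %| b by rewrite -(Hb x0 fx0); apply: dvd_N2.
split; first by rewrite subn1.
have dc := @dcount _ _ f.
have e1 : \sum_(x | f x) #|[set y | hadj x y & ~~ f y]| = #|[set x | f x]| * b.
  rewrite -sum_nat_const; apply: eq_big => x; first by rewrite inE.
  by move=> fx; rewrite Hb.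
have e2 : \sum_(y | ~~ f y) #|[set x | hadj y x & f x]| = #|[set x | ~~ f x]|.
  rewrite -sum1_card; apply: eq_big => x; first by rewrite inE.
  by move=> fx; rewrite H1.
rewrite e1 e2 in dc.
have tot : #|[set x | f x]| + #|[set x | ~~ f x]| = q ^ n.
  have -> : [set x | ~~ f x] = ~: [set x | f x] by apply/setP => x; rewrite !inE.
  by rewrite cardsC card_ffun !card_ord.
have cN : 0 < #|[set x | ~~ f x]| by apply/card_gt0P; exists y0; rewrite inE.
have b0 : 0 < b.
  rewrite -dc in cN; move: cN; rewrite muln_gt0 => /andP [] //.
have tot2 : #|[set x | f x]| * (b + 1) = q ^ n.
  by rewrite mulnDr muln1 dc addnC.
move=> p s pp s0 qE.
have : b + 1 %| p ^ (s * n) by rewrite expnM -qE -tot2 dvdn_mull.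
move/(@dvdn_pfactor p _ _ pp) => [m _ Em].
case/dvdnP: dvdb => k Ek.
have Hs : s %| m.
  apply: (@nt p s m k pp s0); rewrite -Em Ek qE subn1 //.
case/dvdnP: Hs => r Er.
exists r; split.
  rewrite lt0n; apply/eqP => r0; rewrite Er r0 mul0n expn0 in Em; lia.
by rewrite Em qE -expnM mulnC Er.
Qed.
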